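(* Let $C$ be a Cantor fan and let $L\subseteq C$ be a subcontinuum of $C$ that is a Lelek fan. Then $L$ is nowhere dense in $C$, i.e. $\mathrm{Int}_C(\mathrm{Cl}_C(L))=\emptyset$.
   Context: A continuum is a nonempty compact connected metric space. A dendroid is an arcwise connected, hereditarily unicoherent continuum. A point $x$ of a dendroid $X$ is a ramification point if $x$ is the top (the branch point) of some simple triod in $X$. A fan is a dendroid with at most one ramification point; this point, if it exists, is called the top of the fan. For a fan $X$, a point $x$ is an end point of $X$ if $x$ is an end point of every arc in $X$ containing $x$; $E(X)$ denotes the set of end points of $X$. A fan $X$ with top $v$ is smooth if for every $x\in X$ and every sequence $x_n\to x$ in $X$, the arcs from $v$ to $x_n$ converge (in the Hausdorff metric) to the arc from $v$ to $x$. A Lelek fan is a smooth fan $X$ with $\mathrm{Cl}(E(X))=X$. A Cantor fan is a continuum homeomorphic to $\bigcup_{c\in C}A_c\subseteq\mathbb R^2$, where $C\subseteq[0,1]$ is the Cantor middle-third set and $A_c$ is the straight segment from $(\tfrac12,0)$ to $(c,1)$. *)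

(* Defs.v *)
From HB Require Import structures.
From mathcomp Require Import all_boot all_order all_algebra.
From mathcomp Require Import all_classical all_reals all_analysis.
Set Implicit Arguments. Unset Strict Implicit. Unset Printing Implicit Defensive.
Import Order.TTheory GRing.Theory Num.Theory.
Import numFieldNormedType.Exports.
Local Open Scope classical_set_scope.
Local Open Scope ring_scope.

Section Defs.
Variable R : realType.

Definition unit_interval : set R := [set t | 0 <= t <= 1].

Definition homeomorphic {T U : topologicalType} (A : set T) (B : set U) : Prop :=
  exists (f : T -> U) (g : U -> T),
    [/\ (forall x, A x -> B (f x)), (forall y, B y -> A (g y)),
        (forall x, A x -> g (f x) = x) & (forall y, B y -> f (g y) = y)] /\
    {within A, continuous f} /\ {within B, continuous g}.

Definition arc_between {T : topologicalType} (A : set T) (p q : T) : Prop :=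
  exists (h : R -> T) (g : T -> R),
    [/\ (forall t, unit_interval t -> A (h t)), (forall y, A y -> unit_interval (g y)),
        (forall t, unit_interval t -> g (h t) = t) & (forall y, A y -> h (g y) = y)] /\
    [/\ {within unit_interval, continuous h}, {within A, continuous g},
        h 0 = p & h 1 = q].

Definition is_arc {T : topologicalType} (A : set T) : Prop :=
  exists p q, arc_between A p q.

Definition continuum {T : pseudoMetricType R} (X : set T) : Prop :=
  X !=set0 /\ compact X /\ connected X.

Definition arcwise_connected {T : topologicalType} (X : set T) : Prop :=
  forall x y, X x -> X y -> x <> y -> exists A, A `<=` X /\ arc_between A x y.

Definition hereditarily_unicoherent {T : pseudoMetricType R} (X : set T) : Prop :=
  forall A B : set T, A `<=` X -> B `<=` X -> continuum A -> continuum B ->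
    connected (A `&` B).

Definition dendroid {T : pseudoMetricType R} (X : set T) : Prop :=
  [/\ continuum X, arcwise_connected X & hereditarily_unicoherent X].

Definition simple_triod {T : topologicalType} (Y : set T) (v : T) : Prop :=
  exists (A1 A2 A3 : set T) (x1 x2 x3 : T),
    [/\ arc_between A1 v x1, arc_between A2 v x2 & arc_between A3 v x3] /\
    [/\ A1 `&` A2 = [set v], A1 `&` A3 = [set v], A2 `&` A3 = [set v]
      & Y = A1 `|` A2 `|` A3].

Definition ramification_point {T : topologicalType} (X : set T) (x : T) : Prop :=
  exists Y, Y `<=` X /\ simple_triod Y x.

Definition fan {T : pseudoMetricType R} (X : set T) : Prop :=
  dendroid X /\
  forall x y, ramification_point X x -> ramification_point X y -> x = y.

Definition end_point {T : topologicalType} (X : set T) (x : T) : Prop :=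
  X x /\ forall A, A `<=` X -> is_arc A -> A x -> exists q, arc_between A x q.

Definition end_points {T : topologicalType} (X : set T) : set T :=
  [set x | end_point X x].

Definition arc_in_from_to {T : topologicalType} (X : set T) (v x : T) (A : set T) :=
  A `<=` X /\ (if pselect (x = v) then A = [set v] else arc_between A v x).

Definition eps_nbhd {T : pseudoMetricType R} (B : set T) (e : R) : set T :=
  [set y | exists2 b, B b & ball b e y].

Definition hausdorff_cvg {T : pseudoMetricType R} (A : nat -> set T) (B : set T) :=
  forall e : R, 0 < e ->
    \forall n \near \oo, A n `<=` eps_nbhd B e /\ B `<=` eps_nbhd (A n) e.

Definition smooth_fan_top {T : pseudoMetricType R} (X : set T) (v : T) : Prop :=
  [/\ fan X, ramification_point X v &
    forall (x : T) (xn : nat -> T) (An : nat -> set T) (B : set T),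
      X x -> (forall n, X (xn n)) -> xn @ \oo --> x ->
      (forall n, arc_in_from_to X v (xn n) (An n)) -> arc_in_from_to X v x B ->
      hausdorff_cvg An B].

Definition smooth_fan {T : pseudoMetricType R} (X : set T) : Prop :=
  exists v, smooth_fan_top X v.

Definition rel_closure {T : topologicalType} (X A : set T) : set T :=
  closure A `&` X.

Definition rel_interior {T : topologicalType} (X A : set T) : set T :=
  [set x | exists O : set T, [/\ open O, O x, X x & O `&` X `<=` A]].

Definition lelek_fan {T : pseudoMetricType R} (X : set T) : Prop :=
  smooth_fan X /\ rel_closure X (end_points X) = X.

Definition cantor_middle_third : set R :=
  [set x | exists a : nat -> bool,
     (fun n => \sum_(0 <= k < n) (a k)%:R * 2 / 3 ^+ k.+1) @ \oo --> x].

(* straight segment from (1/2,0) to (c,1) *)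
Definition fan_segment (c : R) : set (R * R) :=
  [set p | exists2 t, unit_interval t & p = ((1 - t) * 2^-1 + t * c, t)].

Definition standard_cantor_fan : set (R * R) :=
  \bigcup_(c in cantor_middle_third) fan_segment c.

Definition cantor_fan {T : pseudoMetricType R} (X : set T) : Prop :=
  continuum X /\ homeomorphic X standard_cantor_fan.

End Defs.

(* Main.v *)
Set Warnings "-all".
Require Import Defs.
From HB Require Import structures.
From mathcomp Require Import all_boot all_order all_algebra.
From mathcomp Require Import all_classical all_reals all_analysis.
From mathcomp Require Import ring lra.
Import Order.TTheory GRing.Theory Num.Theory.
Import numFieldNormedType.Exports.
Local Open Scope classical_set_scope.
Local Open Scope ring_scope.

Section H.
Context {R : realType}.

Lemma within_ed {U V : pseudoMetricType R} {A : set U} {f : U -> V} :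
  {within A, continuous f} -> forall x, A x -> forall e : R, 0 < e ->
  exists2 d : R, 0 < d & forall y, A y -> ball x d y -> ball (f x) e (f y).
Proof.
move=> /subspace_continuousP cf x Ax e e0.
have := cf x Ax (ball (f x) e) (nbhsx_ballx _ _ e0).
rewrite /= /within /= => /nbhs_ballP [d d0 H].
by exists d => // y Ay bxy; exact: (H y bxy Ay).
Qed.

Lemma ed_within {U V : pseudoMetricType R} {A : set U} {f : U -> V} :
  (forall x, A x -> forall e : R, 0 < e ->
  exists2 d : R, 0 < d & forall y, A y -> ball x d y -> ball (f x) e (f y)) ->
  {within A, continuous f}.
Proof.
move=> H; apply/subspace_continuousP => x Ax B /nbhs_ballP [e e0 sB].
have [d d0 Hd] := H x Ax e e0.
rewrite /= /within /=; apply/nbhs_ballP; exists d => // y bxy Ay.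
exact: sB (Hd y Ay bxy).
Qed.

Lemma closure_in {T : pseudoMetricType R} {C L : set T} {f : T -> R * R} {g : R * R -> T} :
  L `<=` C -> compact L -> {within C, continuous f} ->
  (forall x, C x -> g (f x) = x) ->
  forall c, C c -> closure L c -> L c.
Proof.
move=> LC cL cf gf c Cc clc.
have cfL : {within L, continuous f} := continuous_subspaceW LC cf.
have cl : closed [set f x | x in L].
  by apply: compact_closed; [exact: norm_hausdorff | exact: continuous_compact].
have : closure [set f x | x in L] (f c).
  move=> B /nbhs_ballP [e e0 sB].
  have [d d0 Hd] := within_ed cf c Cc e e0.
  have [l [Ll cl']] := clc _ (nbhsx_ballx c d d0).
  exists (f l); split; first by exists l.
  exact: sB (Hd l (LC _ Ll) cl').
rewrite -(proj1 (closure_id _) cl) => -[l Ll flc].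
by rewrite -(gf c Cc) -flc gf //; exact: LC.
Qed.

Definition seg (c t : R) : R * R := ((1 - t) * 2^-1 + t * c, t).

Lemma ball_R (a b e : R) : ball a e b <-> `|a - b| < e.
Proof. by rewrite -ball_normE. Qed.

Lemma seg_close c t s d : 0 < d -> `|s - t| < d / (`|c| + 2) ->
  ball (seg c t) d (seg c s).
Proof.
move=> d0 H.
have c2 : 0 < `|c| + 2 by rewrite ltr_pwDr // normr_ge0.
have H1 : `|s - t| * (`|c| + 2) < d by rewrite -ltr_pdivlMr.
have H2 : `|s - t| <= `|s - t| * (`|c| + 2).
  rewrite ler_peMr ?normr_ge0 //; apply: (le_trans (ler1n _ 2)); by rewrite lerDr normr_ge0.
split => /=; apply/ball_R.
  have -> : (1 - t) * 2^-1 + t * c - ((1 - s) * 2^-1 + s * c) = (s - t) * (2^-1 - c)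
    by ring.
  rewrite normrM; apply: le_lt_trans H1; apply: ler_wpM2l; first exact: normr_ge0.
  apply: (le_trans (ler_normB _ _)).
  rewrite addrC lerD2l ger0_norm //.
  lra.
by rewrite distrC; apply: le_lt_trans H1.
Qed.

Lemma half_gt0 : 0 < 2^-1 :> R. Proof. by rewrite invr_gt0 ltr0n. Qed.
Lemma half_le1 : 2^-1 <= 1 :> R. Proof. by rewrite invf_le1 ?ler1n ?ltr0n. Qed.
Lemma uI_of {u : R} : 0 <= u -> u <= 1 -> unit_interval u.
Proof. by move=> a b; apply/andP. Qed.
Lemma uI_ab {a b u : R} : 0 <= a -> b <= 1 -> a <= u -> u <= b -> unit_interval u.
Proof. by move=> a0 b1 au ub; apply/andP; split; [apply: le_trans au|apply: le_trans b1]. Qed.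

End H.

Theorem mainTheorem3 (R : realType) (T : pseudoMetricType R) (C L : set T) :
  cantor_fan C -> L `<=` C -> continuum L -> lelek_fan L ->
  rel_interior C (rel_closure C L) = set0.
Proof.
move=> [_ [f [g [[fC gS gf fg] [cf cg]]]]] LC [_ [cL _]] [_ clos].
apply/seteqP; split => [x [OO [oO Ox Cx sub]]|//].
have CL : forall y, OO y -> C y -> L y.
  move=> y Oy Cy; apply: (closure_in LC cL cf gf y Cy).
  by have [] := sub y (conj Oy Cy).
have [r r0 rO] : exists2 r : R, 0 < r & ball x r `<=` OO.
  have : nbhs x OO by apply: open_nbhs_nbhs; split.
  by move/nbhs_ballP => [r r0 H]; exists r.
have [c Kc [t0 t0I fxe]] := fC x Cx.
have fx' : f x = seg c t0 by rewrite fxe.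
have r20 : 0 < r / 2 by rewrite divr_gt0.
have [d0 d00 Hd0] := within_ed cg (f x) (fC x Cx) (r/2) r20.
have c2 : 0 < `|c| + 2 by rewrite ltr_pwDr // normr_ge0.
pose lam := Num.min 1 (d0 / (`|c| + 2)).
have lam0 : 0 < lam by rewrite /lam lt_min ltr01 divr_gt0.
have [lam1 lamd] : lam <= 1 /\ lam <= d0 / (`|c| + 2).
  by have := lexx lam; rewrite {2}/lam le_min => /andP[].
pose t1 := t0 + lam * (2^-1 - t0).
move: t0I; rewrite /= => /andP[t00 t01].
have t1I : 0 < t1 < 1 by apply/andP; split; rewrite /t1; nra.
have t1d : `|t1 - t0| < d0 / (`|c| + 2).
  apply: lt_le_trans lamd; rewrite ltr_norml /t1; apply/andP; split; nra.
have S1 : standard_cantor_fan (seg c t1).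
  exists c => //; exists t1 => //; move: t1I => /andP[? ?]; apply/andP; split; lra.
pose x1 := g (seg c t1).
have bx1 : ball x (r/2) x1.
  rewrite -{1}(gf x Cx); apply: Hd0 => //; rewrite fx'; exact: seg_close.
have fx1 : f x1 = seg c t1 := fg _ S1.
have Cx1 : C x1 := gS _ S1.
have OO1 : ball x1 (r/2) `<=` OO.
  move=> y by1; apply: rO; rewrite [r]splitr; exact: ball_triangle bx1 by1.
have r40 : 0 < r / 4 by rewrite divr_gt0.
have [d1 d10 Hd1] := within_ed cg (seg c t1) S1 (r/4) r40.
move: t1I => /andP[t10 t11].
pose m := Num.min (d1/2) (Num.min (t1/2) ((1-t1)/2)).
have m0 : 0 < m by rewrite /m !lt_min !divr_gt0 //; lra.
have [m1 m2 m3] : [/\ m <= d1/2, m <= t1/2 & m <= (1-t1)/2].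
  by have := lexx m; rewrite {2}/m !le_min => /andP[-> /andP[-> ->]].
have [eta eta0 Heta] := within_ed cf x1 Cx1 m m0.
have Lx1 : L x1 by apply: CL => //; apply: OO1; exact: ballxx.
have : closure (end_points R L) x1 by rewrite -clos in Lx1; case: Lx1.
move=> /(_ _ (nbhsx_ballx x1 eta eta0)) [e [[Le Hep] be]].
have Ce := LC e Le.
have bfe := Heta e Ce be; rewrite fx1 in bfe.
have [c' Kc' [t' t'I fee]] := fC e Ce.
have fe' : f e = seg c' t' by rewrite fee.
rewrite fe' in bfe.
have tt' : `|t1 - t'| < m by have [_ /ball_R] := bfe.
move: tt'; rewrite ltr_norml => /andP[tt1 tt2].
have t'0 : 0 < t' by lra.
have t'1 : t' < 1 by lra.
have c'2 : 0 < `|c'| + 2 by rewrite ltr_pwDr // normr_ge0.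
pose sig := Num.min (Num.min (t'/2) ((1-t')/2)) (d1/2/(`|c'|+2)/2).
have sig0 : 0 < sig by rewrite /sig !lt_min !divr_gt0 //; lra.
have [s1 s2 s3] : [/\ sig <= t'/2, sig <= (1-t')/2 & sig <= d1/2/(`|c'|+2)/2].
  by have := lexx sig; rewrite {2}/sig !le_min => /andP[/andP[-> ->] ->].
have dpos : 0 < d1/2/(`|c'|+2) by rewrite !divr_gt0.
have s3' : sig < d1/2/(`|c'|+2) by lra.
pose k s := g (seg c' s).
have Sk : forall s, `|s - t'| <= sig -> standard_cantor_fan (seg c' s).
  move=> s; rewrite ler_norml => /andP[? ?].
  exists c' => //; exists s => //; apply/andP; split; lra.
have fk : forall s, `|s - t'| <= sig -> f (k s) = seg c' s.
  by move=> s hs; rewrite /k fg //; exact: Sk.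
have kL : forall s, `|s - t'| <= sig -> L (k s).
  move=> s hs; apply: CL; last exact/gS/Sk.
  have b1 : ball (seg c' t') (d1/2) (seg c' s).
    by apply: seg_close; [lra | apply: le_lt_trans hs s3'].
  have b2 : ball (seg c t1) d1 (seg c' s).
    by apply: (le_ball (e1 := m + d1/2)); [lra | exact: ball_triangle bfe b1].
  have b3 := Hd1 _ (Sk s hs) b2.
  apply: OO1; apply: (le_ball (e1 := r/4)); [lra | exact: b3].
pose A := [set y | exists2 s, `|s - t'| <= sig & y = k s].
have AL : A `<=` L by move=> y [s hs ->]; exact: kL.
have ke : k t' = e by rewrite /k -fe' gf.
have Ae : A e by exists t'; [rewrite subrr normr0; lra | rewrite ke].
pose h u := k (t' - sig + 2 * sig * u).
pose gA y := ((f y).2 - (t' - sig)) / (2 * sig).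
have hs : forall u, unit_interval u -> `|t' - sig + 2 * sig * u - t'| <= sig.
  move=> u /andP[u0 u1]; rewrite ler_norml; apply/andP; split; nra.
have hA : forall u, unit_interval u -> A (h u).
  by move=> u Iu; exists (t' - sig + 2 * sig * u); [exact: hs|].
have sig2 : 0 < 2 * sig by lra.
have gh : forall u, unit_interval u -> gA (h u) = u.
  move=> u Iu; rewrite /gA /h fk ?hs //=.
  by field; rewrite gt_eqF.
have ch : {within unit_interval (R:=R), continuous h}.
  apply: ed_within => u Iu eps eps0.
  have [dd dd0 Hdd] := within_ed cg _ (Sk _ (hs u Iu)) eps eps0.
  exists (dd / (`|c'| + 2) / (2 * sig)); first by rewrite !divr_gt0.
  move=> v Iv /ball_R buv; apply: Hdd; first exact: Sk (hs v Iv).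
  apply: seg_close => //.
  have -> : t' - sig + 2 * sig * v - (t' - sig + 2 * sig * u) = (2 * sig) * (v - u) by ring.
  rewrite normrM gtr0_norm // mulrC -ltr_pdivlMr // distrC //.
have arcA : arc_between R A (h 0) (h 1).
  exists h, gA; split; [split|split] => //.
  - move=> y [s hs' ->]; rewrite /gA fk //= ; move: hs'; rewrite ler_norml => /andP[? ?].
    apply/andP; split; first by apply: divr_ge0; lra.
    by rewrite ler_pdivrMr //; lra.
  - move=> y [s hs' ->]; rewrite /gA /h fk //=; congr (g (seg c' _)).
    by field; rewrite gt_eqF.
  - apply: ed_within => y Ay eps eps0.
    have Cy : C y by apply/LC/AL.
    have [dd dd0 Hdd] := within_ed cf y Cy (eps * (2 * sig)) (mulr_gt0 eps0 sig2).
    exists dd => // z Az byz.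
    have [_ /ball_R H2] := Hdd z (LC _ (AL _ Az)) byz.
    apply/ball_R.
    have -> : gA y - gA z = ((f y).2 - (f z).2) / (2 * sig).
      by rewrite /gA; field; rewrite gt_eqF.
    by rewrite normf_div (gtr0_norm sig2) ltr_pdivrMr.
have [q [h2 [g2 [[h2A g2I g2h2 h2g2] [ch2 cg2 h20 h21]]]]] :=
  Hep A AL (ex_intro _ _ (ex_intro _ _ arcA)) Ae.
pose phi u := g2 (h u).
have phic : forall a b, 0 <= a -> b <= 1 -> {within `[a, b], continuous phi}.
  move=> a b a0 b1; apply: ed_within => u; rewrite /= in_itv /= => /andP[ua ub] eps eps0.
  have uI : unit_interval u := uI_ab a0 b1 ua ub.
  have [e1 e10 He1] := within_ed cg2 (h u) (hA u uI) eps eps0.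
  have [e2 e20 He2] := within_ed ch u uI e1 e10.
  exists e2 => // v; rewrite /= in_itv /= => /andP[va vb] buv.
  have vI : unit_interval v := uI_ab a0 b1 va vb.
  exact: He1 _ (hA v vI) (He2 v vI buv).
have I0 : unit_interval (0 : R) by apply: uI_of; rewrite ?ler01.
have I1 : unit_interval (1 : R) by apply: uI_of; rewrite ?ler01.
have Ih : unit_interval (2^-1 : R) by apply: uI_of; [exact: ltW half_gt0|exact: half_le1].
have phalf : phi 2^-1 = 0.
  rewrite /phi /h (_ : t' - sig + 2 * sig * 2^-1 = t'); last by field.
  by rewrite ke -h20 g2h2.
have inj : forall u v, unit_interval u -> unit_interval v -> phi u = phi v -> u = v.
  move=> u v Iu Iv E.
  have E2 : h u = h v by rewrite -(h2g2 _ (hA u Iu)) -(h2g2 _ (hA v Iv)); congr h2.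
  by rewrite -(gh u Iu) -(gh v Iv) E2.
have ph0 : 0 <= phi 0 by have /andP[] := g2I _ (hA 0 I0).
have ph1 : 0 <= phi 1 by have /andP[] := g2I _ (hA 1 I1).
have [le01|lt10] := leP (phi 0) (phi 1).
  have [u uI E] : exists2 u, u \in `[2^-1, 1] & phi u = phi 0.
    apply: IVT; [exact: half_le1 | apply: phic; [exact: ltW half_gt0|exact: lexx] |].
    rewrite phalf; apply/andP; split.
      by rewrite ge_min ph0.
    by rewrite le_max le01 orbT.
  move: uI; rewrite in_itv /= => /andP[u1 u2].
  have Iu : unit_interval u := uI_ab (ltW half_gt0) (lexx 1) u1 u2.
  have u0 := inj u 0 Iu I0 E.
  by move: u1; rewrite u0 leNgt half_gt0.
have [u uI E] : exists2 u, u \in `[0, 2^-1] & phi u = phi 1.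
  apply: IVT; [exact: ltW half_gt0 | apply: phic; [exact: lexx|exact: half_le1] |].
  rewrite phalf; apply/andP; split.
    by rewrite ge_min ph1 orbT.
  by rewrite le_max (ltW lt10).
move: uI; rewrite in_itv /= => /andP[u1 u2].
have Iu : unit_interval u := uI_ab (lexx 0) half_le1 u1 u2.
have u0 := inj u 1 Iu I1 E.
by move: u2; rewrite u0 leNgt (lt_le_trans _ (lexx 1)) // ?ltr1n //; rewrite invf_lt1 ?ltr0n ?ltr1n.
Qed.
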